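(* Let $p$ be a prime. (1) For every $X\in\mathcal{X}_p$ there exist $n\in\mathbb{N}$ and a cyclic subgroup $H$ of the multiplicative group $\mathbb{Z}_{p^n}^\times$ such that $X=\pi_n^{-1}(H)$. (2) For every $n\in\mathbb{N}$ and every cyclic subgroup $H$ of $\mathbb{Z}_{p^n}^\times$ of order $|H|\ge\max\{p,3\}$ there exists $a\in\mathbb{N}\setminus p\mathbb{N}$ such that $\pi_n^{-1}(H)=\overline{a^{\mathbb{N}}}\in\mathcal{X}_p$.
   Context: $\mathbb{N}=\{1,2,\dots\}$, $\mathbb{N}_0=\{0\}\cup\mathbb{N}$, $x^{\mathbb{N}}=\{x^k:k\in\mathbb{N}\}$. $\mathbb{Z}_{p^n}=\mathbb{Z}/p^n\mathbb{Z}$ with unit group $\mathbb{Z}_{p^n}^\times$, and $\pi_n:\mathbb{N}\to\mathbb{Z}_{p^n}$, $x\mapsto x+p^n\mathbb{Z}$. The $p$-adic topology on $\mathbb{N}\setminus p\mathbb{N}$ is generated by the sets $x+p^m\mathbb{N}_0$ ($x,m\in\mathbb{N}$). $\mathcal{X}_p=\{\overline{a^{\mathbb{N}}}:a\in\mathbb{N}\setminus p\mathbb{N},\ a\ne1\}$, closures taken in the $p$-adic topology on $\mathbb{N}\setminus p\mathbb{N}$. *)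

(* Defs.v *)
From mathcomp Require Import all_boot all_order all_algebra all_fingroup all_solvable.
Set Implicit Arguments. Unset Strict Implicit. Unset Printing Implicit Defensive.

(* Subsets of nat are predicates nat -> Prop; N = {1,2,...} is {x | 0 < x}. *)

Definition pow_set (a : nat) : nat -> Prop :=
  fun y => exists k, 0 < k /\ y = a ^ k.

(* Basic open set x + p^m N_0 of the p-adic topology (x, m in N). *)
Definition padic_ball (p x m : nat) : nat -> Prop :=
  fun y => x <= y /\ y = x %[mod p ^ m].

Definition padic_closure (p : nat) (S : nat -> Prop) : nat -> Prop :=
  fun y => [/\ 0 < y, ~~ (p %| y) &
    forall x m, 0 < x -> 0 < m -> padic_ball p x m y ->
      exists s, S s /\ padic_ball p x m s].

Definition in_Xp (p : nat) (X : nat -> Prop) : Prop :=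
  exists a, [/\ 0 < a, ~~ (p %| a), a != 1 &
    forall y, X y <-> padic_closure p (pow_set a) y].

Definition pi_preim (p n : nat) (H : {set {unit 'Z_(p ^ n)}}) : nat -> Prop :=
  fun x => 0 < x /\ exists u : {unit 'Z_(p ^ n)}, u \in H /\ val u = (x%:R : 'Z_(p ^ n))%R.
Arguments pi_preim : clear implicits.

(* Main.v *)
Require Import Defs.
From mathcomp Require Import all_boot all_order all_algebra all_fingroup all_solvable.
From mathcomp Require Import ring zify.
Set Implicit Arguments. Unset Strict Implicit. Unset Printing Implicit Defensive.

Lemma binom3 x s : exists r, (1 + x) ^ s = 1 + s * x + 'C(s, 2) * x ^ 2 + r * x ^ 3.
Proof.
elim: s => [|s [r IH]]; first by exists 0; rewrite expn0 bin0n.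
exists (r + 'C(s, 2) + r * x); rewrite expnS IH binS bin1; ring.
Qed.

Lemma binom2 x s : exists r, (1 + x) ^ s = 1 + s * x + r * x ^ 2.
Proof.
have [r ->] := binom3 x s; exists ('C(s, 2) + r * x); ring.
Qed.

Lemma valP0 p N : prime p -> 0 < N -> exists c, ~~ (p %| c) /\ N = c * p ^ logn p N.
Proof.
move=> hp N0; have dv : p ^ logn p N %| N by rewrite pfactor_dvdn.
exists (N %/ p ^ logn p N); rewrite divnK //; split => //.
apply/negP => /dvdnP [k Ek].
suff : p ^ (logn p N).+1 %| N by rewrite pfactor_dvdn // ltnn.
move: (logn p N) dv Ek => l dv Ek.
rewrite -(divnK dv) Ek expnS mulnC. by rewrite mulnAC -mulnA dvdn_mull.
Qed.

Lemma lte p j c : prime p -> 0 < j -> (p = 2 -> 1 < j) -> ~~ (p %| c) ->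
  exists c', ~~ (p %| c') /\ (1 + c * p ^ j) ^ p = 1 + c' * p ^ j.+1.
Proof.
move=> hp j0 j2 pc.
have p1 := prime_gt1 hp.
case: j j0 j2 => // j _ j2.
set P := p ^ j.
have [r Er] := binom3 (c * p ^ j.+1) p.
have [K EK] : exists K, 'C(p, 2) * (c * p ^ j.+1) ^ 2 = p ^ 3 * P * K.
  case: (eqVneq p 2) => [p2|p2].
    have j1 : 0 < j by have := j2 p2; lia.
    exists (c ^ 2 * p ^ j.-1).
    rewrite /P p2 binn; clear P Er; case: j j1 {j2} => // j _ /=; rewrite !expnS; ring.
  have : p %| 'C(p, 2) by apply: prime_dvd_bin => //; lia.
  case/dvdnP => K0 ->; exists (K0 * c ^ 2 * P); rewrite /P (expnS p j); ring.
exists (c + p * (K + r * c ^ 3 * P ^ 2)); split.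
  by rewrite dvdn_addl ?dvdn_mulr.
rewrite Er EK /P !expnS; ring.
Qed.

Lemma moddesc d D x y : d %| D -> x = y %[mod D] -> x = y %[mod d].
Proof. by move=> dv E; rewrite -(modn_dvdm x dv) -(modn_dvdm y dv) E. Qed.

Lemma modM d x x' y y' : x = x' %[mod d] -> y = y' %[mod d] -> x * y = x' * y' %[mod d].
Proof. by move=> E1 E2; rewrite -modnMm E1 E2 modnMm. Qed.

Lemma lte_iter p n c : prime p -> 0 < n -> (p = 2 -> 1 < n) -> ~~ (p %| c) ->
  forall i, exists ci, ~~ (p %| ci) /\ (1 + c * p ^ n) ^ (p ^ i) = 1 + ci * p ^ (n + i).
Proof.
move=> hp n0 n2 pc; elim=> [|i [ci [pci IH]]]; first by exists c; rewrite addn0 expn0 expn1.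
have [c' [pc' E]] := lte hp (j := n + i) (c := ci) (ltn_addr _ n0)
   (fun h => leq_trans (n2 h) (leq_addr _ _)) pci.
by exists c'; rewrite expnSr expnM IH E addnS.
Qed.

Lemma coprime_1p p c n : prime p -> 0 < n -> coprime (1 + c * p ^ n) p.
Proof.
move=> hp n0; rewrite coprime_sym prime_coprime //.
rewrite dvdn_addl ?dvdn_mull ?dvdn_exp // dvdn1; have := prime_gt1 hp; lia.
Qed.

Lemma lift p n c : prime p -> 0 < n -> (p = 2 -> 1 < n) -> ~~ (p %| c) ->
  forall i z, z = 1 %[mod p ^ n] -> exists t, z = (1 + c * p ^ n) ^ t %[mod p ^ (n + i)].
Proof.
move=> hp n0 n2 pc.
have p1 := prime_gt1 hp; have p0 := prime_gt0 hp.
elim=> [|i IH] z Ez; first by exists 0; rewrite addn0 expn0.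
have [t Et] := IH z Ez.
have [ci [pci Eci]] := lte_iter hp n0 n2 pc i.
set b := 1 + c * p ^ n in Et Eci *.
set m := n + i in Et Eci *.
set M := p ^ m.+1.
have m0 : 0 < m by rewrite ltn_addr.
have dvM : p ^ m %| M by rewrite dvdn_exp2l.
have M_eq : M = p * p ^ m by rewrite /M expnS.
set u := b ^ t in Et *.
have cu : coprime u M by rewrite coprimeXl // coprime_pexpr // coprime_1p.
set phi := totient M.
have phi0 : 0 < phi by rewrite totient_gt0 expn_gt0 p0.
have Eu : u ^ phi = 1 %[mod M] := Euler_exp_totient cu.
have uu : u * u ^ phi.-1 = u ^ phi by rewrite -expnS prednK.
set w := z * u ^ phi.-1.
have Ew : w = 1 %[mod p ^ m].
  rewrite /w (modM Et (erefl _)) uu; exact: moddesc dvM Eu.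
set d := (w %% M) %/ p ^ m.
have M1 : 1 < p ^ m := leq_ltn_trans m0 (ltn_expl m p1).
have Ewd : w %% M = 1 + d * p ^ m.
  by rewrite {1}(divn_eq (w %% M) (p ^ m)) -/d modn_dvdm // Ew modn_small // addnC.
have cci : coprime ci p by rewrite coprime_sym prime_coprime.
set s := d * ci ^ (totient p).-1.
have Es : s * ci = d %[mod p].
  rewrite /s -mulnA -expnSr prednK ?totient_gt0 //.
  by rewrite -modnMmr (Euler_exp_totient cci) modnMmr muln1.
have [r Er] := binom2 (ci * p ^ m) s.
have pm : p ^ m = p ^ m.-1 * p by rewrite -expnSr prednK.
have E2 : r * (ci * p ^ m) ^ 2 = (r * ci ^ 2 * p ^ m.-1) * M.
  by rewrite M_eq pm; ring.
have key : (s * ci * p ^ m) %% M = (d * p ^ m) %% M.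
  by rewrite M_eq -!muln_modl ?expn_gt0 ?p0 // Es.
have EB : (b ^ (p ^ i)) ^ s = w %[mod M].
  rewrite Eci Er E2 [_ + _ * M]addnC modnMDl Ewd.
  by rewrite mulnA -modnDmr key modnDmr -Ewd modn_mod.
have Efin : b ^ (t + p ^ i * s) = z %[mod M].
  rewrite expnD expnM -/u (modM (erefl (u %% M)) EB) /w mulnCA uu.
  by rewrite -modnMmr Eu modnMmr muln1.
by exists (t + p ^ i * s); rewrite addnS -/m -/M Efin.
Qed.

Lemma closureP p a : prime p -> 1 < a -> coprime a p -> forall y,
  padic_closure p (pow_set a) y <->
  [/\ 0 < y, ~~ (p %| y) & forall m, 0 < m -> exists k, y = a ^ k %[mod p ^ m]].
Proof.
move=> hp a1 cap y; split.
  case=> y0 ny H; split => // m m0.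
  have [s [[k [k0 ->]] [_ E]]] := H y m y0 m0 (conj (leqnn y) erefl).
  by exists k; rewrite E.
case=> y0 ny H; split => // x m x0 m0 [xy E].
have [k Ek] := H m m0.
set phi := totient (p ^ m).
have phi0 : 0 < phi by rewrite totient_gt0 expn_gt0 prime_gt0.
set K := k + phi * x.+1.
exists (a ^ K); split.
  by exists K; split => //; rewrite /K addn_gt0 muln_gt0 phi0 orbT.
split.
  apply: ltnW; apply: leq_trans (ltn_expl K a1).
  rewrite /K; nia.
have cam : coprime a (p ^ m) by rewrite coprime_pexpr.
rewrite -E Ek /K expnD expnM -modnMmr -modnXm (Euler_exp_totient cam) modnXm.
by rewrite exp1n modnMmr muln1.
Qed.

Lemma mainP p a n e c : prime p -> 1 < a -> ~~ (p %| a) -> 0 < n -> (p = 2 -> 1 < n) ->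
  ~~ (p %| c) -> a ^ e = 1 + c * p ^ n -> forall y,
  (0 < y /\ exists k, y = a ^ k %[mod p ^ n]) <-> padic_closure p (pow_set a) y.
Proof.
move=> hp a1 pa n0 n2 pc Ea y.
have cap : coprime a p by rewrite coprime_sym prime_coprime.
rewrite closureP //; split; last first.
  by case=> y0 _ H; split => //; exact: H.
case=> y0 [k Ek]; split => //.
  apply/negP => py.
  have : p %| a ^ k.
    move: py; rewrite /dvdn; move/eqP => py.
    have dvp : p %| p ^ n by rewrite -{1}(expn1 p) dvdn_exp2l.
    by rewrite -(moddesc dvp Ek) py.
  by rewrite Euclid_dvdX // (negbTE pa).
move=> m m0.
set m' := n + m.
have cu : coprime (a ^ k) (p ^ m') by rewrite coprimeXl // coprime_pexpr ?addn_gt0 ?n0.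
set phi := totient (p ^ m').
have phi0 : 0 < phi by rewrite totient_gt0 expn_gt0 prime_gt0.
have Eu : (a ^ k) ^ phi = 1 %[mod p ^ m'] := Euler_exp_totient cu.
have uu : a ^ k * (a ^ k) ^ phi.-1 = (a ^ k) ^ phi by rewrite -expnS prednK.
set z := y * (a ^ k) ^ phi.-1.
have dvn : p ^ n %| p ^ m' by rewrite dvdn_exp2l // leq_addr.
have Ez : z = 1 %[mod p ^ n].
  by rewrite /z (modM Ek (erefl _)) uu; exact: moddesc dvn Eu.
have [t Et] := lift hp n0 n2 pc m Ez.
rewrite -/m' -Ea -expnM in Et.
exists (e * t + k).
have dvm : p ^ m %| p ^ m' by rewrite dvdn_exp2l // leq_addl.
apply: (moddesc dvm).
rewrite expnD -(modM Et (erefl (a ^ k %% p ^ m'))) /z -mulnA [_ ^ phi.-1 * _]mulnC uu.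
by rewrite -modnMmr Eu modnMmr muln1.
Qed.
Import GRing.Theory.

Lemma pn_gt1 p n : prime p -> 0 < n -> 1 < p ^ n.
Proof. by move=> hp n0; apply: leq_ltn_trans n0 (ltn_expl n (prime_gt1 hp)). Qed.

Lemma ZnatE p n x y : prime p -> 0 < n ->
  ((x%:R : 'Z_(p ^ n))%R = y%:R)%R <-> x = y %[mod p ^ n].
Proof.
move=> hp n0; have M1 := pn_gt1 hp n0; split => [E|E].
  by have := congr1 (@nat_of_ord _) E; rewrite !val_Zp_nat.
by rewrite -(Zp_nat_mod M1 x) E Zp_nat_mod.
Qed.

Lemma PRE p n (h : {unit 'Z_(p ^ n)}) a : prime p -> 0 < n -> val h = (a%:R)%R ->
  forall y, pi_preim p n <[h]>%g y <-> 0 < y /\ exists k, y = a ^ k %[mod p ^ n].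
Proof.
move=> hp n0 Eh y; split.
  case=> y0 [u [/cycleP [i ->] Eu]]; split => //; exists i.
  rewrite FinRing.val_unitX Eh -natrX in Eu.
  by apply/(ZnatE _ _ hp n0).
case=> y0 [k Ek]; split => //; exists (h ^+ k)%g; split; first exact: mem_cycle.
by rewrite FinRing.val_unitX Eh -natrX; apply/(ZnatE _ _ hp n0).
Qed.

Lemma odd_sq x : odd x -> 4 %| x ^ 2 - 1.
Proof.
move=> ox; rewrite -(odd_double_half x) ox -mul2n.
have -> : (true + 2 * x./2) ^ 2 = 1 + (x./2 ^ 2 + x./2) * 4 by rewrite /=; ring.
by rewrite addKn dvdn_mull.
Qed.

Lemma Znat1 p n x : prime p -> 0 < n ->
  ((x%:R : 'Z_(p ^ n))%R = 1%R) <-> x = 1 %[mod p ^ n].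
Proof. by move=> hp n0; have := ZnatE x 1 hp n0; rewrite mulr1n. Qed.

Lemma KEY0 p n (h : {unit 'Z_(p ^ n)}) : prime p -> 0 < n -> maxn p 3 <= #[h]%g ->
  exists a, val h = (a%:R)%R /\
    exists e c, [/\ ~~ (p %| c), a ^ e = 1 + c * p ^ n & (p = 2 -> 1 < n)].
Proof.
move=> hp n0 Hc.
have p1 := prime_gt1 hp; have p0 := prime_gt0 hp.
have M1 := pn_gt1 hp n0.
have dvp : p %| p ^ n by rewrite -{1}(expn1 p) dvdn_exp2l.
set d := #[h]%g in Hc.
have d0 : 0 < d := order_gt0 h.
set a := nat_of_ord (val h : 'Z_(p ^ n)).
have Eh : val h = (a%:R)%R by rewrite natr_Zp.
have Epow : forall k, val (h ^+ k)%g = ((a ^ k)%:R)%R.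
  by move=> k; rewrite FinRing.val_unitX Eh natrX.
have cap : coprime a p.
  have : (a%:R : 'Z_(p ^ n))%R \is a GRing.unit by rewrite -Eh; exact: valP.
  by rewrite unitZpE // coprime_pexpl // coprime_sym.
have a0 : 0 < a.
  rewrite lt0n; apply/negP => /eqP a0; move: cap; rewrite a0 /coprime gcd0n => /eqP; lia.
have Ead : a ^ d = 1 %[mod p ^ n].
  by apply/(Znat1 _ hp n0); rewrite -Epow expg_order FinRing.val_unit1.
have ad1 : 1 <= a ^ d by rewrite expn_gt0 a0.
have H4 : p = 2 -> 4 %| d.
  move=> p2.
  have : d %| totient (p ^ n).
    by rewrite -card_units_Zp ?expn_gt0 ?p0 //; apply: order_dvdG; exact: in_setT.
  rewrite totient_pfactor // p2 mul1n => /(@dvdn_pfactor 2 d n.-1 isT) [k _ dk].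
  rewrite dk p2 in Hc *; case: k {dk} Hc => [|[|k]] // _.
  by rewrite !expnS mulnA dvdn_mulr.
case: (boolP (p %| d)) => [pd|npd].
  set g := a ^ (d %/ p).
  have Egp : g ^ p = a ^ d by rewrite -expnM divnK.
  have dp0 : 0 < d %/ p by rewrite divn_gt0 // dvdn_leq.
  have dpd : d %/ p < d by rewrite ltn_Pdiv.
  have gn1 : g %% p ^ n != 1 %% p ^ n.
    apply/negP => /eqP E.
    have : (h ^+ (d %/ p))%g == 1%g.
      apply/eqP; apply: val_inj; rewrite Epow FinRing.val_unit1.
      by apply/(Znat1 _ hp n0).
    by rewrite -order_dvdn -/d => /dvdn_leq => /(_ dp0); lia.
  have g0 : 0 < g by rewrite expn_gt0 a0.
  have g1 : 1 < g.
    rewrite ltn_neqAle g0 andbT; apply: contra gn1 => /eqP <-; exact: eqxx.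
  have cgp : coprime g p by rewrite coprimeXl.
  have [j0 [j01 j02 dvj0]] : exists j0, [/\ 0 < j0, (p = 2 -> 1 < j0) & p ^ j0 %| g - 1].
    case: (eqVneq p 2) => [p2|p2].
      exists 2; split => //.
      have [K EK] := dvdnP (H4 p2).
      have -> : g = (a ^ K) ^ 2.
        by rewrite /g EK p2 -expnM (_ : K * 4 = (K * 2) * 2) ?mulnK // -mulnA.
      rewrite p2; apply: odd_sq; rewrite oddX -coprimen2 -p2 cap orbT //.
    exists 1; split => //; first by move=> E; rewrite E eqxx in p2.
    rewrite expn1 -eqn_mod_dvd ?g0 //; apply/eqP.
    have F : g ^ p = g %[mod p].
      rewrite -{1}(prednK p0) expnS -modnMmr -(totient_prime hp).
      by rewrite (Euler_exp_totient cgp) modnMmr muln1.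
    by rewrite -F Egp; exact: moddesc dvp Ead.
  have g10 : 0 < g - 1 by rewrite subn_gt0.
  have [c0 [pc0 Ec0]] := valP0 hp g10.
  have jj0 : j0 <= logn p (g - 1) by rewrite -pfactor_dvdn.
  move: (logn p (g - 1)) jj0 Ec0 => j jj0 Ec0.
  have jn : j < n.
    rewrite ltnNge; apply: contra gn1 => nj.
    by rewrite eqn_mod_dvd ?g0 // Ec0 dvdn_mull // dvdn_exp2l.
  have Eg : g = 1 + c0 * p ^ j by rewrite -Ec0 subnKC.
  have [c' [pc' Ec']] := lte hp (leq_trans j01 jj0) (fun e => leq_trans (j02 e) jj0) pc0.
  rewrite -Eg Egp in Ec'.
  have nj : n = j.+1.
    apply/eqP; rewrite eqn_leq jn andbT leqNgt; apply/negP => jn2.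
    have : p ^ n %| c' * p ^ j.+1.
      by move: Ead => /eqP; rewrite eqn_mod_dvd // Ec' addKn.
    move/(dvdn_trans (dvdn_exp2l _ jn2)).
    by rewrite expnS dvdn_pmul2r ?expn_gt0 ?p0 // (negbTE pc').
  exists a; split => //; exists d, c'; split => //; first by rewrite nj.
  by move=> E; have := j02 E; move: jj0 nj; clear; lia.
have p2 : p != 2.
  by apply: contraNneq npd => p2; rewrite p2; exact: (dvdn_trans (isT : 2 %| 4) (H4 p2)).
have n2 : p = 2 -> 1 < n by move=> E; rewrite E eqxx in p2.
have dv : p ^ n %| a ^ d - 1 by rewrite -eqn_mod_dvd //; apply/eqP.
set c0 := (a ^ d - 1) %/ p ^ n.
have Ea : a ^ d = 1 + c0 * p ^ n by rewrite divnK // subnKC.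
case: (boolP (p %| c0)) => pc0; last by exists a; split => //; exists d, c0.
have [r Er] := binom2 (p ^ n) d.
exists (a * (1 + p ^ n)); split.
  by rewrite Eh; apply/(ZnatE _ _ hp n0); rewrite mulnDr muln1 addnC modnMDl.
exists d, (c0 + d + p ^ n * (c0 * d + r + c0 * r * p ^ n)); split => //.
  by rewrite dvdn_addl ?dvdn_mulr // dvdn_addr.
rewrite expnMn Ea Er; move: (p ^ n) => P; ring.
Qed.

Theorem lemma4p2 (p : nat) (hp : prime p) :
  (forall X : nat -> Prop, in_Xp p X ->
     exists n : nat, exists H : {group {unit 'Z_(p ^ n)}},
       0 < n /\ cyclic H /\ (forall x, X x <-> pi_preim p n H x))
  /\
  (forall (n : nat) (H : {group {unit 'Z_(p ^ n)}}), 0 < n -> cyclic H ->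
     maxn p 3 <= #|H| ->
     exists a : nat, [/\ 0 < a, ~~ (p %| a),
       (forall x, pi_preim p n H x <-> padic_closure p (pow_set a) x) &
       in_Xp p (padic_closure p (pow_set a))]).
Proof.
have p0 := prime_gt0 hp; have p1 := prime_gt1 hp.
split.
  move=> X [a [a0 pa a1 HX]].
  have a2 : 1 < a by rewrite ltn_neqAle eq_sym a1 a0.
  have cap : coprime a p by rewrite coprime_sym prime_coprime.
  set e := totient (p ^ 2).
  have e0 : 0 < e by rewrite totient_gt0 expn_gt0 p0.
  have Ee : a ^ e = 1 %[mod p ^ 2] by apply: Euler_exp_totient; rewrite coprime_pexpr.
  have ae1 : 1 < a ^ e := leq_ltn_trans e0 (ltn_expl e a2).
  have N0 : 0 < a ^ e - 1 by rewrite subn_gt0.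
  have [c [pc EN]] := valP0 hp N0.
  have n2 : 2 <= logn p (a ^ e - 1).
    by rewrite -pfactor_dvdn // -eqn_mod_dvd ?(ltnW ae1) //; apply/eqP.
  move: (logn p (a ^ e - 1)) n2 EN => n n2 EN.
  have n0 : 0 < n by apply: leq_trans n2.
  have Ea : a ^ e = 1 + c * p ^ n by rewrite -EN subnKC // ltnW.
  have uu : (a%:R : 'Z_(p ^ n))%R \is a GRing.unit.
    by rewrite unitZpE ?pn_gt1 // coprime_pexpl // coprime_sym.
  pose ua := FinRing.Unit uu.
  exists n, <[ua]>%G; split => //; split; first exact: cycle_cyclic.
  move=> y; rewrite HX -(mainP hp a2 pa n0 (fun _ => n2) pc Ea y).
  exact: iff_sym (PRE hp n0 (erefl (val ua)) y).
move=> n H n0 /cyclicP [h Hh] Hc.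
have Hc' : maxn p 3 <= #[h]%g by rewrite /order -Hh.
have [a [Eh [e [c [pc Ea n2]]]]] := KEY0 hp n0 Hc'.
have cap : coprime a p.
  have : (a%:R : 'Z_(p ^ n))%R \is a GRing.unit by rewrite -Eh; exact: valP.
  by rewrite unitZpE ?pn_gt1 // coprime_pexpl // coprime_sym.
have pa : ~~ (p %| a) by rewrite -prime_coprime // coprime_sym.
have a2 : 1 < a.
  rewrite ltnNge; apply/negP => a1.
  have : a = 0 \/ a = 1 by move: a1; clear; lia.
  case=> Ea1.
    by move: pa; rewrite Ea1 dvdn0.
  have h1 : h = 1%g by apply: val_inj; rewrite Eh Ea1 FinRing.val_unit1.
  by move: Hc'; rewrite h1 order1; move: p1; clear; lia.
have a0 : 0 < a by apply: ltnW.
exists a; split => //.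
  by move=> y; rewrite Hh (PRE hp n0 Eh y); exact: mainP hp a2 pa n0 n2 pc Ea y.
exists a; split => //; by rewrite neq_ltn a2 orbT.
Qed.
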